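(* For $i=1,\dots,q$ let $\lambda_i$ be a partition of $k_i$ and let $G_i$ be an $S_{\lambda_i}$-$k_i$-colourable graph. Let $\lambda=\bigcup_{i=1}^q\lambda_i$ be the multiset union and $k=k_1+\dots+k_q$. Then the join $\vee_{i=1}^qG_i$ is $S_\lambda$-$k$-colourable.
   Context: View a graph $G$ as a symmetric digraph: each edge $uv$ gives arcs $e=(u,v)$ and $e^{-1}=(v,u)$. For an inverse-closed set $S$ of permutations, an $S$-signature of $G$ is a map $\sigma$ from arcs to $S$ with $\sigma(e^{-1})=\sigma(e)^{-1}$. A $k$-colouring of $(G,\sigma)$ is a map $f:V(G)\to[k]$ with $\sigma(e)(f(x))\ne f(y)$ for every arc $e=(x,y)$; $G$ is $S$-$k$-colourable if $(G,\sigma)$ is $k$-colourable for every $S$-signature $\sigma$. For a partition $\lambda=\{k_1,\dots,k_q\}$ of $k$ (listed in a fixed order), let $s_0=0$, $s_j=s_{j-1}+k_j$, $I_j=\{s_{j-1}+1,\dots,s_j\}$, and let $S_\lambda$ be the set of permutations $\pi$ of $[k]$ with $\pi(I_j)=I_j$ for all $j$. The join $\vee_{i=1}^qG_i$ is the disjoint union of the $G_i$ plus all edges between $V(G_i)$ and $V(G_j)$ for $i\ne j$. *)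

(* Defs.v *)
From mathcomp Require Import all_boot all_fingroup.
Set Implicit Arguments. Unset Strict Implicit. Unset Printing Implicit Defensive.

(* A graph is a symmetric irreflexive relation E on a finite vertex type T.
   Each edge uv gives the two arcs (u,v) and (v,u); a signature assigns a
   permutation of the colour set 'I_k to every arc. *)

Definition is_signature (T : finType) (E : rel T) (k : nat)
    (S : pred {perm 'I_k}) (sigma : T -> T -> {perm 'I_k}) : Prop :=
  forall x y, E x y -> sigma x y \in S /\ sigma y x = (sigma x y)^-1%g.

Definition is_colouring (T : finType) (E : rel T) (k : nat)
    (sigma : T -> T -> {perm 'I_k}) (f : T -> 'I_k) : Prop :=
  forall x y, E x y -> sigma x y (f x) != f y.

Definition S_colourable (T : finType) (E : rel T) (k : nat)
    (S : pred {perm 'I_k}) : Prop :=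
  forall sigma, is_signature E S sigma -> exists f : T -> 'I_k, is_colouring E sigma f.

Definition is_partition (lam : seq nat) (k : nat) : bool :=
  all (fun p => 0 < p) lam && (sumn lam == k).

(* The block I_j (0-indexed, colours 0..k-1): s_{j} <= x < s_{j+1},
   where s_j = sum of the first j parts. *)
Definition block (lam : seq nat) (k : nat) (j : nat) : {set 'I_k} :=
  [set x : 'I_k | (sumn (take j lam) <= x) && (x < sumn (take j.+1 lam))].

Definition S_lambda (lam : seq nat) (k : nat) : pred {perm 'I_k} :=
  fun pi => [forall j : 'I_(size lam), pi @: block lam k j == block lam k j].

Definition join_rel (q : nat) (T : 'I_q -> finType) (E : forall i, rel (T i))
    : rel {i : 'I_q & T i} :=
  fun x y => if tag x == tag y then E (tag x) (tagged x) (tagged_as x y) else true.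

Arguments block lam k j : clear implicits.
Arguments S_lambda lam k : clear implicits.

(* Main.v *)
Require Import Defs.
From mathcomp Require Import all_boot all_fingroup.
From mathcomp Require Import zify.

Lemma pofE (T : finType) (f : T -> T) (fi : injective f) (a : T) :
  (insubd (1%g : {perm T}) [ffun x => f x]) a = f a.
Proof.
have inj : injectiveb [ffun x => f x] by apply/injectiveP => x y; rewrite !ffunE; exact: fi.
by rewrite -pvalE -[pval _]/(val _) val_insubd inj ffunE.
Qed.

Definition cut (L : seq nat) j := sumn (take j L).

Lemma cut_mono L {m n} : m <= n -> cut L m <= cut L n.
Proof. by move=> mn; rewrite /cut -(subnKC mn) takeD sumn_cat leq_addr. Qed.

Lemma cutS L j : j < size L -> cut L j.+1 = cut L j + nth 0 L j.
Proof. by move=> h; rewrite /cut (take_nth 0 h) sumn_rcons. Qed.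

Lemma cut_over L {j} : size L <= j -> cut L j = sumn L.
Proof. by move=> h; rewrite /cut take_oversize. Qed.

Lemma cut0 L : cut L 0 = 0. Proof. by rewrite /cut take0. Qed.

Lemma cut_le L n : cut L n <= sumn L.
Proof. by rewrite /cut -{2}(cat_take_drop n L) sumn_cat leq_addr. Qed.

Lemma mem_block L k j (x : 'I_k) : (x \in block L k j) = (cut L j <= x < cut L j.+1).
Proof. by rewrite inE. Qed.

Lemma same_block L m a b j : cut L m <= a < cut L m.+1 -> cut L m <= b < cut L m.+1 ->
  (cut L j <= a) = (cut L j <= b).
Proof.
move=> ha hb; case: (leqP j m) => jm.
  have := cut_mono L jm. lia.
have := cut_mono L jm. lia.
Qed.

Lemma S_lambda_cut L k (p : {perm 'I_k}) : p \in S_lambda L k ->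
  forall j (x : 'I_k), (cut L j <= p x) = (cut L j <= x).
Proof.
move=> /forallP Hp.
have Hb : forall j, j < size L -> forall x : 'I_k, (p x \in block L k j) = (x \in block L k j).
  move=> j hj x; have /eqP E := Hp (Ordinal hj).
  by rewrite -{1}E mem_imset //; exact: perm_inj.
suff H : forall j, j <= size L -> forall x : 'I_k, (x < cut L j) = (p x < cut L j).
  move=> j x; case: (leqP j (size L)) => hj.
    by rewrite leqNgt [RHS]leqNgt (H j hj x).
  by rewrite (cut_over L (ltnW hj)) -(cut_over L (leqnn (size L))) leqNgt [RHS]leqNgt (H _ (leqnn _) x).
elim=> [|j IH] hj x; first by rewrite cut0.
have e : forall y : 'I_k, (y < cut L j.+1) = (y < cut L j) || (y \in block L k j).
  move=> y; rewrite mem_block; have h := cut_mono L (leqnSn j).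
  case: (ltnP y (cut L j)) => /= h2; last by [].
  by rewrite (leq_trans h2 h).
by rewrite !e IH ?Hb // ltnW.
Qed.

Lemma cut_S_lambda L k (p : {perm 'I_k}) :
  (forall j (x : 'I_k), (cut L j <= p x) = (cut L j <= x)) -> p \in S_lambda L k.
Proof.
move=> H; apply/forallP => j; rewrite eqEcard card_imset ?leqnn ?andbT; last exact: perm_inj.
apply/subsetP => y /imsetP [x xB ->]; move: xB; rewrite !mem_block (H j) !ltnNge (H j.+1).
done.
Qed.

Lemma colourable_conj (T : finType) (E : rel T) k (S1 S2 : pred {perm 'I_k}) (phi : {perm 'I_k}) :
  (forall p, p \in S1 -> (phi^-1 * p * phi)%g \in S2) ->
  S_colourable E S2 -> S_colourable E S1.
Proof.
move=> HS Hc sigma Hsig.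
have [|f Hf] := Hc (fun x y => (phi^-1 * sigma x y * phi)%g).
  move=> x y Exy; have [h1 h2] := Hsig x y Exy; split; first exact: HS.
  by rewrite h2 !invMg invgK !mulgA.
exists (fun x => phi^-1%g (f x)) => x y Exy.
have := Hf x y Exy; rewrite !permM; apply: contra => /eqP ->.
by rewrite permKV.
Qed.

Lemma reduce_perm (T : finType) (E : rel T) k (lam L : seq nat) :
  perm_eq lam L -> sumn L = k ->
  S_colourable E (S_lambda L k) -> S_colourable E (S_lambda lam k).
Proof.
move=> Hpe HL.
have Hk : sumn lam = k by rewrite (perm_sumn Hpe).
have /(perm_iotaP 0) [Is HIs Hlam] := Hpe.
have szI : size Is = size L by rewrite (perm_size HIs) size_iota.
have szl : size lam = size L by rewrite Hlam size_map.
have uI : uniq Is by rewrite (perm_uniq HIs) iota_uniq.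
have IsL : forall j, j < size L -> nth 0 Is j < size L.
  move=> j hj; have : nth 0 Is j \in Is by rewrite mem_nth // szI.
  by rewrite (perm_mem HIs) mem_iota.
have nthl : forall j, j < size L -> nth 0 lam j = nth 0 L (nth 0 Is j).
  by move=> j hj; rewrite Hlam (nth_map 0) // szI.
pose bi (z : nat) := find (fun j => z < cut lam j.+1) (iota 0 (size lam)).
have Hhas : forall z : 'I_k, has (fun j => z < cut lam j.+1) (iota 0 (size lam)).
  move=> z; apply/hasP; exists (size lam).-1.
    rewrite mem_iota /=; move: Hk (ltn_ord z); case: (lam) => [|a l] /= e h; first lia.
    by [].
  by rewrite (cut_over lam (leqSpred _)) Hk.
have bi_lt : forall z : 'I_k, bi z < size L.
  by move=> z; rewrite -szl; move: (Hhas z); rewrite has_find size_iota.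
have bi_up : forall z : 'I_k, z < cut lam (bi z).+1.
  move=> z; have := nth_find 0 (Hhas z).
  by rewrite nth_iota ?add0n //; move: (bi_lt z); rewrite -szl.
have bi_lo : forall z : 'I_k, cut lam (bi z) <= z.
  move=> z; case Eb: (bi z) => [|b]; first by rewrite cut0.
  have := before_find 0 (_ : b < bi z); rewrite Eb => /(_ (leqnn _)).
  rewrite nth_iota; first by move/negbT; rewrite -leqNgt.
  by have := bi_lt z; rewrite szl Eb; lia.
pose psi (z : 'I_k) := cut L (nth 0 Is (bi z)) + (z - cut lam (bi z)).
have psi_blk : forall z : 'I_k, cut L (nth 0 Is (bi z)) <= psi z < cut L (nth 0 Is (bi z)).+1.
  move=> z; have hb := bi_lt z; rewrite cutS ?IsL // -nthl //.
  have := bi_up z; rewrite cutS ?szl //; have := bi_lo z; rewrite /psi; lia.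
have psi_lt : forall z : 'I_k, psi z < k.
  move=> z; have := psi_blk z; have := cut_le L (nth 0 Is (bi z)).+1; rewrite HL; lia.
pose psif (z : 'I_k) := Ordinal (psi_lt z).
have psi_inj : injective psif.
  move=> z1 z2 /(congr1 val) /= E12.
  have h1 := psi_blk z1; have h2 := psi_blk z2.
  have Eb : nth 0 Is (bi z1) = nth 0 Is (bi z2).
    case: (ltngtP (nth 0 Is (bi z1)) (nth 0 Is (bi z2))) => // c.
      have := cut_mono L c; lia.
    have := cut_mono L c; lia.
  have Eb' : bi z1 = bi z2.
    by apply/eqP; rewrite -(nth_uniq 0 _ _ uI) ?szI ?bi_lt // Eb.
  apply: ord_inj; move: E12; rewrite /psi Eb Eb'.
  have := bi_lo z1; have := bi_lo z2; rewrite Eb'; lia.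
apply: (@colourable_conj _ _ _ _ _ (perm psi_inj)) => p Hp.
apply: cut_S_lambda => j y.
rewrite !permM -{2}(permKV (perm psi_inj) y).
set z := ((perm psi_inj)^-1)%g y.
have Ebi : bi (p z) = bi z.
  apply: eq_find => i; rewrite !ltnNge.
  by rewrite (S_lambda_cut _ _ _ Hp).
rewrite !permE /= /psif /=.
apply: (@same_block L (nth 0 Is (bi z))) => //.
by rewrite -Ebi.
Qed.
Set Implicit Arguments. Unset Strict Implicit. Unset Printing Implicit Defensive.

Definition appn k (p : {perm 'I_k}) (n : nat) : nat :=
  if insub n is Some x then val (p x) else n.

Lemma appnE k (p : {perm 'I_k}) (x : 'I_k) : appn p x = p x.
Proof. by rewrite /appn valK. Qed.

Definition rfun k (p : {perm 'I_k}) s m (a : 'I_m) : 'I_m := insubd a (appn p (s + a) - s).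
Definition restr k (p : {perm 'I_k}) s m : {perm 'I_m} :=
  insubd (1%g : {perm 'I_m}) [ffun a => rfun p s a].

Lemma restrE k (p : {perm 'I_k}) s m : s + m <= k ->
  (forall x : 'I_k, (s <= p x) = (s <= x)) ->
  (forall x : 'I_k, (s + m <= p x) = (s + m <= x)) ->
  forall (a : 'I_m) (x : 'I_k), val x = s + a -> s + restr p s m a = p x.
Proof.
move=> Hsm H1 H2.
have key : forall (a : 'I_m) (x : 'I_k), val x = s + a ->
    val (insubd a (appn p (s + a) - s) : 'I_m) = p x - s /\ s <= p x.
  move=> a x hx; rewrite -hx appnE val_insubd.
  have := H1 x; have := H2 x; rewrite hx; have := ltn_ord a.
  move=> ha e2 e1.
  have l1 : s <= p x by rewrite e1 leq_addr.
  have l2 : p x < s + m by rewrite ltnNge e2 -ltnNge ltn_add2l.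
  have -> : p x - s < m by lia.
  by [].
have ginj : injective (@rfun _ p s m).
  move=> a1 a2 E12.
  have hk1 : s + a1 < k by have := ltn_ord a1; lia.
  have hk2 : s + a2 < k by have := ltn_ord a2; lia.
  have [e1 l1] := key a1 (Ordinal hk1) erefl.
  have [e2 l2] := key a2 (Ordinal hk2) erefl.
  have : p (Ordinal hk1) = p (Ordinal hk2).
    apply: ord_inj; move: (congr1 val E12); rewrite e1 e2; lia.
  move/perm_inj/(congr1 val) => /= h; apply: ord_inj; lia.
move=> a x hx; rewrite /restr (pofE _ _ ginj) /rfun; have [e l] := key a x hx.
move: e l => /= e l; rewrite e; lia.
Qed.

Lemma main_ordered (q : nat) (T : 'I_q -> finType) (E : forall i, rel (T i))
    (ks : 'I_q -> nat) (lams : 'I_q -> seq nat)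
    (Esym : forall i, symmetric (E i))
    (Hpart : forall i, is_partition (lams i) (ks i))
    (Hcol : forall i, S_colourable (E i) (S_lambda (lams i) (ks i))) k :
  sumn (flatten [seq lams i | i <- enum 'I_q]) = k ->
  S_colourable (join_rel E) (S_lambda (flatten [seq lams i | i <- enum 'I_q]) k).
Proof.
set LL := [seq lams i | i <- enum 'I_q]; set L := flatten LL.
move=> HL sigma Hsig.
have szLL : size LL = q by rewrite size_map size_enum_ord.
have nthLL : forall i : 'I_q, nth [::] LL i = lams i.
  by move=> i; rewrite (nth_map i) ?nth_ord_enum // size_enum_ord.
have ksE : forall i, sumn (lams i) = ks i by move=> i; case/andP: (Hpart i) => _ /eqP.
pose s (i : 'I_q) := cut (map sumn LL) i.
pose idx (i : 'I_q) := size (flatten (take i LL)).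
have cutL : forall (i : 'I_q) j, j <= size (lams i) -> cut L (idx i + j) = s i + cut (lams i) j.
  move=> i j hj; rewrite /L /idx /s /cut -map_take -sumn_flatten.
  rewrite -[in flatten LL](cat_take_drop i LL) flatten_cat takeD take_size_cat // drop_size_cat //.
  rewrite (drop_nth [::]) ?szLL // nthLL /= takel_cat // sumn_cat.
  by [].
have sS : forall i : 'I_q, s i + ks i = cut (map sumn LL) i.+1.
  move=> i; rewrite /s cutS; last by rewrite size_map szLL.
  by rewrite (nth_map [::]) ?szLL // nthLL ksE.
have sk : forall i : 'I_q, s i + ks i <= k.
  move=> i; rewrite sS -HL /L sumn_flatten; exact: cut_le.
have sij : forall i j : 'I_q, i < j -> s i + ks i <= s j.
  move=> i j ij; rewrite sS; exact: cut_mono.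
have Hblk : forall x y, join_rel E x y -> forall (i : 'I_q) j, j <= size (lams i) ->
   forall z : 'I_k, (s i + cut (lams i) j <= sigma x y z) = (s i + cut (lams i) j <= z).
  move=> x y hxy i j hj z; rewrite -cutL //; apply: S_lambda_cut; exact: (Hsig x y hxy).1.
have Hlo : forall x y, join_rel E x y -> forall (i : 'I_q) (z : 'I_k),
    (s i <= sigma x y z) = (s i <= z).
  move=> x y hxy i z; have := Hblk x y hxy i 0 (leq0n _) z; by rewrite cut0 addn0.
have Hhi : forall x y, join_rel E x y -> forall (i : 'I_q) (z : 'I_k),
    (s i + ks i <= sigma x y z) = (s i + ks i <= z).
  move=> x y hxy i z; have := Hblk x y hxy i _ (leqnn _) z.
  by rewrite (cut_over _ (leqnn _)) ksE.
pose sigi (i : 'I_q) (u v : T i) := restr (sigma (Tagged T u) (Tagged T v)) (s i) (ks i).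
have Hedge : forall i (u v : T i), E i u v -> join_rel E (Tagged T u) (Tagged T v).
  by move=> i u v; rewrite /join_rel /= eqxx tagged_asE.
have Hres : forall i (u v : T i), E i u v -> forall (a : 'I_(ks i)) (x : 'I_k),
    val x = s i + a -> s i + sigi i u v a = sigma (Tagged T u) (Tagged T v) x.
  move=> i u v huv; apply: restrE; first exact: sk.
    by move=> z; apply: Hlo; apply: Hedge.
  by move=> z; apply: Hhi; apply: Hedge.
have Hsigi : forall i, is_signature (E i) (S_lambda (lams i) (ks i)) (sigi i).
  move=> i u v huv; split.
    apply: cut_S_lambda => j a.
    case: (leqP j (size (lams i))) => hj.
      have ha : s i + a < k by have := sk i; have := ltn_ord a; lia.
      have := Hblk _ _ (Hedge _ _ _ huv) i j hj (Ordinal ha).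
      by rewrite -(Hres _ _ _ huv a (Ordinal ha) erefl) /= !leq_add2l.
    rewrite (cut_over _ (ltnW hj)) ksE.
    have h1 := ltn_ord (sigi i u v a); have h2 := ltn_ord a.
    by rewrite leqNgt h1 leqNgt h2.
  have [_ hinv] := Hsig _ _ (Hedge _ _ _ huv).
  have hvu : E i v u by rewrite Esym.
  apply/permP => b; rewrite -{1}(permKV (sigi i u v) b).
  set a := ((sigi i u v)^-1)%g b.
  apply: ord_inj; apply/(@addnI (s i)).
  have ha : s i + a < k by have := sk i; have := ltn_ord a; lia.
  have e1 := Hres _ _ _ huv a (Ordinal ha) erefl.
  rewrite (Hres _ _ _ hvu _ (sigma (Tagged T u) (Tagged T v) (Ordinal ha))) ?e1 //.
  by rewrite hinv permK.
have [F HF] := @fin_all_exists _ (fun i => T i -> 'I_(ks i))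
  (fun i f => is_colouring (E i) (sigi i) f) (fun i => Hcol i (sigi i) (Hsigi i)).
have colt : forall x : {i : 'I_q & T i}, s (tag x) + F (tag x) (tagged x) < k.
  by move=> x; have := sk (tag x); have := ltn_ord (F (tag x) (tagged x)); lia.
exists (fun x => Ordinal (colt x)).
move=> [i u] [j v] hxy /=.
case: (eqVneq i j) => [eij | nij].
  subst j.
  have huv : E i u v by move: hxy; rewrite /join_rel /= eqxx tagged_asE.
  have := HF i u v huv; apply: contra => /eqP e.
  apply/eqP; apply: ord_inj; apply/(@addnI (s i)).
  rewrite (Hres _ _ _ huv _ (Ordinal (colt (existT _ i u)))) //.
  by rewrite e.
apply/negP => /eqP e.
have l1 := Hlo _ _ hxy i (Ordinal (colt (existT _ i u))).
have l2 := Hhi _ _ hxy i (Ordinal (colt (existT _ i u))).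
rewrite e /= in l1 l2.
have := ltn_ord (F j v); have := ltn_ord (F i u).
case: (ltngtP i j) => c.
- have := sij _ _ c; move: l1 l2; rewrite leq_addr ltnNge.
  lia.
- have := sij _ _ c; move: l1 l2; rewrite leq_addr.
  lia.
- by move/ord_inj: c; move/eqP: nij.
Qed.

Theorem lemma16 (q : nat) (T : 'I_q -> finType) (E : forall i, rel (T i))
    (ks : 'I_q -> nat) (lams : 'I_q -> seq nat)
    (Esym : forall i, symmetric (E i)) (Eirr : forall i, irreflexive (E i))
    (Hpart : forall i, is_partition (lams i) (ks i))
    (Hcol : forall i, S_colourable (E i) (S_lambda (lams i) (ks i)))
    (lam : seq nat)
    (Hlam : perm_eq lam (flatten [seq lams i | i <- enum 'I_q])) :
  S_colourable (join_rel E) (S_lambda lam (\sum_(i < q) ks i)).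
Proof.
have HS : sumn (flatten [seq lams i | i <- enum 'I_q]) = \sum_(i < q) ks i.
  rewrite sumn_flatten -map_comp.
  rewrite (eq_map (g := ks)); last by move=> i /=; case/andP: (Hpart i) => _ /eqP.
  by rewrite sumnE big_map big_enum.
apply: (@reduce_perm _ _ _ lam _ Hlam HS).
exact: (main_ordered Esym Hpart Hcol HS).
Qed.
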